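(* Assume (A1). For every constant $p>0$ there exists $u_0>0$ such that the integral equation \[ g(u)=\frac{\mu}{u^\gamma e^{-\alpha/u}}\int_0^u t^{\gamma-2}e^{-\alpha/t}\Big(p\,\bar F(t)+\int_0^t g(z)\bar F(t-z)\,dz\Big)dt,\qquad 0<u\le u_0, \] has a unique solution $g\in C([0,u_0])$, and this solution satisfies $g(0)=\lambda p/c$.
   Context: $F$ is the distribution function of a positive random variable (claim size), $\bar F=1-F$. Parameters: $\kappa\in(0,1]$, $a\in\mathbb{R}$, $r\ge0$, $\sigma>0$, $c>0$, $\lambda>0$, and $\gamma=\dfrac{2((a-r)\kappa+r)}{\kappa^2\sigma^2}$, $\alpha=\dfrac{2c}{\kappa^2\sigma^2}$, $\mu=\dfrac{2\lambda}{\kappa^2\sigma^2}$. Assumption (A1): $F(0)=0$. The value $g(0)$ of a continuous $g$ on $[0,u_0]$ is its limit as $u\downarrow0$. *)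

(* Defs.v *)
From Stdlib Require Import Reals.
From Coquelicot Require Import Coquelicot.
Open Scope R_scope.

Definition is_distribution_function (F : R -> R) : Prop :=
  (forall x y, x <= y -> F x <= F y) /\
  (forall x, filterlim F (at_right x) (locally (F x))) /\
  filterlim F (Rbar_locally m_infty) (locally 0) /\
  filterlim F (Rbar_locally p_infty) (locally 1).

Definition positive_rv_cdf (F : R -> R) : Prop :=
  is_distribution_function F /\ (forall x, x < 0 -> F x = 0).

Definition Fbar (F : R -> R) (x : R) : R := 1 - F x.

Definition continuous_on_closed (a b : R) (g : R -> R) : Prop :=
  forall x, a <= x <= b ->
    filterlim g (within (fun y => a <= y <= b) (locally x)) (locally (g x)).

Definition gamma_ (kappa a r sigma : R) : R :=
  2 * ((a - r) * kappa + r) / (kappa ^ 2 * sigma ^ 2).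
Definition alpha_ (kappa sigma c : R) : R := 2 * c / (kappa ^ 2 * sigma ^ 2).
Definition mu_ (kappa sigma lambda : R) : R := 2 * lambda / (kappa ^ 2 * sigma ^ 2).

Definition rhs (F : R -> R) (gam alp mu p : R) (g : R -> R) (u : R) : R :=
  mu / (Rpower u gam * exp (- alp / u)) *
  RInt (fun t => Rpower t (gam - 2) * exp (- alp / t) *
                 (p * Fbar F t + RInt (fun z => g z * Fbar F (t - z)) 0 t)) 0 u.

Definition solves (F : R -> R) (gam alp mu p u0 : R) (g : R -> R) : Prop :=
  continuous_on_closed 0 u0 g /\
  forall u, 0 < u <= u0 -> g u = rhs F gam alp mu p g u.

(* Main.v *)
Require Import Defs.
From Stdlib Require Import Reals Lra Lia Classical.
From Coquelicot Require Import Coquelicot.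
Open Scope R_scope.

Lemma ball_R (x y d : R) : ball x d y <-> Rabs (y - x) < d.
Proof. reflexivity. Qed.

Lemma cont_eps (f : R -> R) (x : R) :
  (forall eps, 0 < eps -> exists delta, 0 < delta /\
     forall y, Rabs (y - x) < delta -> Rabs (f y - f x) < eps) ->
  continuous f x.
Proof.
  intros H. apply filterlim_locally. intros eps.
  destruct (H eps (cond_pos eps)) as [d [Hd Hy]].
  exists (mkposreal d Hd). intros y Hy'. apply Hy. exact Hy'.
Qed.

Lemma cont_eps_inv (f : R -> R) (x : R) : continuous f x ->
  forall eps, 0 < eps -> exists delta, 0 < delta /\
     forall y, Rabs (y - x) < delta -> Rabs (f y - f x) < eps.
Proof.
  intros H eps Heps.
  destruct (proj1 (filterlim_locally f (f x)) H (mkposreal eps Heps)) as [d Hd].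
  exists d. split. apply cond_pos. intros y Hy. apply (Hd y). exact Hy.
Qed.

Definition clamp (a b x : R) := Rmax a (Rmin b x).

Lemma clamp_lip a b x y : a <= b -> Rabs (clamp a b y - clamp a b x) <= Rabs (y - x).
Proof.
  intros Hab. unfold clamp, Rmax, Rmin.
  repeat (destruct Rle_dec); unfold Rabs; repeat destruct Rcase_abs; lra.
Qed.

Lemma clamp_in a b x : a <= b -> a <= clamp a b x <= b.
Proof. intros. unfold clamp, Rmax, Rmin. repeat destruct Rle_dec; lra. Qed.

Lemma clamp_id a b x : a <= x <= b -> clamp a b x = x.
Proof. intros. unfold clamp, Rmax, Rmin. repeat destruct Rle_dec; lra. Qed.

Lemma clamp_mono a b x y : x <= y -> clamp a b x <= clamp a b y.
Proof. intros. unfold clamp, Rmax, Rmin. repeat destruct Rle_dec; lra. Qed.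

Lemma clamp_cont a b x : a <= b -> continuous (clamp a b) x.
Proof.
  intros Hab. apply cont_eps. intros eps He. exists eps; split; auto.
  intros y Hy. eapply Rle_lt_trans. apply clamp_lip; auto. auto.
Qed.

Lemma cont_comp_clamp a b (f : R -> R) x : a <= b ->
  (forall y, a <= y <= b -> continuous f y) -> continuous (fun x => f (clamp a b x)) x.
Proof.
  intros Hab Hf. apply continuous_comp. apply clamp_cont; auto.
  apply Hf. apply clamp_in; auto.
Qed.

Lemma cont_bounded (f : R -> R) a b : a <= b ->
  (forall x, a <= x <= b -> continuous f x) ->
  exists B, 0 <= B /\ forall x, a <= x <= b -> Rabs (f x) <= B.
Proof.
  intros Hab Hf.
  destruct (continuity_ab_maj (fun x => Rabs (f x)) a b Hab) as [M [HM _]].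
  { intros c Hc. apply continuity_pt_filterlim.
    apply (continuous_comp f Rabs). apply Hf; auto. apply continuous_Rabs. }
  exists (Rabs (f M)). split. apply Rabs_pos. auto.
Qed.

Lemma int_up (f h : R -> R) (c a b : R) : a <= b ->
  (forall x, continuous f x) -> (forall x y, x <= y -> h x <= h y) ->
  ex_RInt (fun x => f x * (if Rle_dec c (h x) then 1 else 0)) a b.
Proof.
  intros Hab Hf Hh.
  destruct (classic (forall x, a <= x <= b -> c <= h x)) as [Hall | Hn].
  - apply (ex_RInt_ext f).
    + intros x Hx. rewrite Rmin_left in Hx by lra. rewrite Rmax_right in Hx by lra.
      destruct Rle_dec as [_|Hc]. rewrite Rmult_1_r; reflexivity. exfalso; apply Hc, Hall; lra.
    + apply (@ex_RInt_continuous R_CompleteNormedModule). intros; apply Hf.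
  - apply not_all_ex_not in Hn. destruct Hn as [x0 Hx0].
    apply imply_to_and in Hx0. destruct Hx0 as [Hx0 Hx0'].
    set (S := fun x => a <= x <= b /\ h x < c).
    destruct (completeness S) as [s [Hs1 Hs2]].
    { exists b. intros x Hx. apply Hx. }
    { exists x0. split; auto. lra. }
    assert (Hx0s : x0 <= s). { apply Hs1. split; auto; lra. }
    assert (Hsb : s <= b). { apply Hs2. intros x Hx; apply Hx. }
    apply (ex_RInt_Chasles _ a s b).
    + apply (ex_RInt_ext (fun _ => 0)).
      * intros x Hx. rewrite Rmin_left in Hx by lra. rewrite Rmax_right in Hx by lra.
        destruct (classic (exists y, S y /\ x < y)) as [[y [[_ Hy] Hxy]] | Hno].
        -- destruct Rle_dec as [Hc|_]. exfalso. specialize (Hh x y (Rlt_le _ _ Hxy)). lra. rewrite Rmult_0_r; reflexivity.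
        -- exfalso. assert (s <= x). { apply Hs2. intros y Hy.
             destruct (Rle_dec y x); auto. exfalso; apply Hno. exists y; split; auto; lra. }
           lra.
      * apply ex_RInt_const.
    + apply (ex_RInt_ext f).
      * intros x Hx. rewrite Rmin_left in Hx by lra. rewrite Rmax_right in Hx by lra.
        destruct Rle_dec as [_|Hc]. rewrite Rmult_1_r; reflexivity. exfalso.
        assert (S x). { split. lra. lra. } specialize (Hs1 x H). lra.
      * apply (@ex_RInt_continuous R_CompleteNormedModule). intros; apply Hf.
Qed.


Fixpoint stair (e y : R) (n : nat) : R :=
  match n with O => 0 | S k => stair e y k + (if Rle_dec ((INR k + 1) * e) y then e else 0) end.

Lemma stair_inv e y j : 0 < e -> 0 <= y ->
  (INR j * e <= y -> stair e y j = INR j * e) /\ stair e y j <= y /\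
  (y < INR j * e -> y - e <= stair e y j).
Proof.
  intros He Hy. induction j as [|j IH].
  - simpl. split. intros; ring. split. lra. intros; lra.
  - destruct IH as [I1 [I2 I3]]. rewrite S_INR. simpl.
    destruct Rle_dec as [H|H].
    + assert (INR j * e <= y) by lra. rewrite I1 by auto.
      split. intros; ring. split. lra. intros; lra.
    + split. intros; lra. split. lra. intros Hl.
      destruct (Rle_dec (INR j * e) y). rewrite I1 by auto. lra. rewrite Rplus_0_r. apply I3. lra.
Qed.

Lemma int_stair (f h : R -> R) e a b j : a <= b ->
  (forall x, continuous f x) -> (forall x y, x <= y -> h x <= h y) ->
  ex_RInt (fun x => f x * stair e (h x) j) a b.
Proof.
  intros Hab Hf Hh. induction j as [|j IH].
  - simpl. apply (ex_RInt_ext (fun _ => 0)). intros; simpl; rewrite Rmult_0_r; reflexivity.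
    apply ex_RInt_const.
  - apply (ex_RInt_ext (fun x => plus (f x * stair e (h x) j)
             (scal e (f x * (if Rle_dec ((INR j + 1) * e) (h x) then 1 else 0))))).
    + intros x _. simpl. unfold plus, scal; simpl. unfold mult; simpl.
      destruct Rle_dec; ring.
    + apply (@ex_RInt_plus R_NormedModule); auto. apply (@ex_RInt_scal R_NormedModule). apply int_up; auto.
Qed.

Lemma int_mono_up (f h : R -> R) a b : a <= b ->
  (forall x, continuous f x) -> (forall x y, x <= y -> h x <= h y) ->
  ex_RInt (fun x => f x * h x) a b.
Proof.
  intros Hab Hf Hh.
  set (fc := fun x => f (clamp a b x)).
  set (hc := fun x => h (clamp a b x)).
  set (m := h a). set (d := h b - h a + 1).
  assert (Hd : 0 < d). { unfold d. specialize (Hh a b Hab). lra. }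
  assert (Hfc : forall x, continuous fc x). { intros x. apply cont_comp_clamp; auto. }
  assert (Hhc : forall x y, x <= y -> hc x - m <= hc y - m).
  { intros x y Hxy. unfold hc. apply Rplus_le_compat_r, Hh, clamp_mono; auto. }
  assert (Hy : forall x, 0 <= hc x - m < d).
  { intros x. unfold hc, m, d. destruct (clamp_in a b x Hab).
    pose proof (Hh _ _ H). pose proof (Hh _ _ H0). lra. }
  destruct (cont_bounded fc a b Hab) as [B [HB0 HB]]. { intros; apply Hfc. }
  assert (HBall : forall x, Rabs (fc x) <= B).
  { intros x. unfold fc. rewrite <- (clamp_id a b (clamp a b x)) by (apply clamp_in; auto).
    apply HB. apply clamp_in; auto. }
  set (e := fun n : nat => d / (INR n + 1)).
  assert (He : forall n, 0 < e n). { intros n. unfold e. apply Rdiv_lt_0_compat; auto.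
    pose proof (pos_INR n); lra. }
  set (A := fun (n : nat) x => fc x * m + fc x * stair (e n) (hc x - m) (S n)).
  assert (HA : forall n x, Rabs (fc x * hc x - A n x) <= B * e n).
  { intros n x. unfold A.
    destruct (stair_inv (e n) (hc x - m) (S n) (He n) (proj1 (Hy x))) as [_ [I2 I3]].
    assert (Hlt : hc x - m < INR (S n) * e n).
    { unfold e. rewrite S_INR. field_simplify. apply Hy. pose proof (pos_INR n); lra. }
    specialize (I3 Hlt).
    replace (fc x * hc x - (fc x * m + fc x * stair (e n) (hc x - m) (S n)))
      with (fc x * ((hc x - m) - stair (e n) (hc x - m) (S n))) by ring.
    rewrite Rabs_mult. apply Rmult_le_compat; try apply Rabs_pos; auto.
    unfold Rabs; destruct Rcase_abs; lra. }
  assert (Hlim : filterlim A eventually (locally (T := fct_UniformSpace R R_UniformSpace) (fun x => fc x * hc x))).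
  { apply filterlim_locally. intros eps.
    destruct (archimed (B * d / eps)) as [Har _].
    destruct (INR_unbounded (B * d / eps)) as [N HN].
    exists N. intros n Hn t. apply ball_R. rewrite Rabs_minus_sym.
    eapply Rle_lt_trans. apply HA.
    assert (HNn : INR N <= INR n) by (apply le_INR; lia).
    pose proof (cond_pos eps).
    unfold e. apply (Rmult_lt_reg_r (INR n + 1)). pose proof (pos_INR n); lra.
    replace (B * (d / (INR n + 1)) * (INR n + 1)) with (B * d) by (field; pose proof (pos_INR n); lra).
    assert (B * d / eps < INR n + 1) by lra.
    apply (Rmult_lt_compat_r eps) in H0; auto.
    replace (B * d / eps * eps) with (B*d) in H0 by (field; lra). lra. }
  assert (HAi : forall n, is_RInt (A n) a b (RInt (A n) a b)).
  { intros n. apply (@RInt_correct R_CompleteNormedModule). unfold A.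
    apply (ex_RInt_ext (fun x => plus (fc x * m) (fc x * stair (e n) (hc x - m) (S n)))).
    intros; reflexivity.
    apply (@ex_RInt_plus R_NormedModule).
    apply (@ex_RInt_continuous R_CompleteNormedModule). intros z _.
    apply (continuous_mult fc (fun _ => m)). apply Hfc. apply continuous_const.
    apply (int_stair fc (fun x => hc x - m)); auto. }
  destruct (filterlim_RInt A a b eventually _ (fun x => fc x * hc x) _ HAi Hlim) as [If [_ HIf]].
  apply (ex_RInt_ext (fun x => fc x * hc x)).
  - intros x Hx. rewrite Rmin_left in Hx by lra. rewrite Rmax_right in Hx by lra.
    unfold fc, hc. rewrite clamp_id by lra. reflexivity.
  - exists If. exact HIf.
Qed.

Lemma int_mono_down (f h : R -> R) a b : a <= b ->
  (forall x, continuous f x) -> (forall x y, x <= y -> h y <= h x) ->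
  ex_RInt (fun x => f x * h x) a b.
Proof.
  intros Hab Hf Hh.
  apply (ex_RInt_ext (fun x => opp (f x * (- h x)))).
  intros; unfold opp; simpl; ring.
  apply (@ex_RInt_opp R_NormedModule). apply int_mono_up; auto. intros x y Hxy. specialize (Hh x y Hxy). lra.
Qed.


Lemma ex_RInt_extR (f g : R -> R) a b : (forall x, Rmin a b < x < Rmax a b -> f x = g x) ->
  ex_RInt f a b -> ex_RInt g a b.
Proof. apply ex_RInt_ext. Qed.
Lemma RInt_extR (f g : R -> R) a b : (forall x, Rmin a b < x < Rmax a b -> f x = g x) ->
  RInt f a b = RInt g a b.
Proof. apply RInt_ext. Qed.

Lemma exR_any (f : R -> R) a b : (a <= b -> ex_RInt f a b) -> (b <= a -> ex_RInt f b a) -> ex_RInt f a b.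
Proof.
  intros H1 H2. destruct (Rle_dec a b). auto. apply ex_RInt_swap. apply H2; lra.
Qed.

Lemma RInt_swapR (f : R -> R) a b : ex_RInt f b a -> RInt f a b = - RInt f b a.
Proof. intros H. rewrite <- (opp_RInt_swap (V := R_CompleteNormedModule) f b a H). unfold opp; simpl; ring. Qed.

Lemma abs_RInt_le_const' (f : R -> R) a b M : ex_RInt f a b ->
  (forall t, Rmin a b <= t <= Rmax a b -> Rabs (f t) <= M) ->
  Rabs (RInt f a b) <= Rabs (b - a) * M.
Proof.
  intros Hi Hb. destruct (Rle_dec a b).
  - rewrite (Rabs_right (b - a)) by lra. apply abs_RInt_le_const; auto.
    intros t Ht. apply Hb. rewrite Rmin_left, Rmax_right; lra.
  - rewrite RInt_swapR by (apply ex_RInt_swap; auto). rewrite Rabs_Ropp.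
    rewrite (Rabs_left (b - a)) by lra. replace (- (b - a)) with (a - b) by ring.
    apply abs_RInt_le_const. lra. apply ex_RInt_swap; auto.
    intros t Ht. apply Hb. rewrite Rmin_right, Rmax_left; lra.
Qed.

Lemma int_cm (g Fb : R -> R) a b : (forall x, continuous g x) ->
  (forall x y, x <= y -> Fb y <= Fb x) -> ex_RInt (fun s => g s * Fb s) a b.
Proof.
  intros Hg HF. apply exR_any; intros; apply int_mono_down; auto.
Qed.

Lemma int_cm_up (g Fb : R -> R) a b : (forall x, continuous g x) ->
  (forall x y, x <= y -> Fb x <= Fb y) -> ex_RInt (fun s => g s * Fb s) a b.
Proof.
  intros Hg HF. apply exR_any; intros; apply int_mono_up; auto.
Qed.

Lemma cont_shift (g : R -> R) t : (forall x, continuous g x) -> forall x, continuous (fun s => g (t - s)) x.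
Proof.
  intros Hg x. apply (continuous_comp (fun s => t - s) g).
  apply (continuous_minus (fun _ => t) (fun s => s)). apply continuous_const. apply continuous_id.
  apply Hg.
Qed.

Lemma G_alt (g Fb : R -> R) t : (forall x, continuous g x) ->
  (forall x y, x <= y -> Fb y <= Fb x) ->
  RInt (fun z => g z * Fb (t - z)) 0 t = RInt (fun s => g (t - s) * Fb s) 0 t.
Proof.
  intros Hg HF.
  assert (Hex : ex_RInt (fun z => g z * Fb (t - z)) ((-1) * 0 + t) ((-1) * t + t)).
  { apply (int_cm_up g (fun z => Fb (t - z))); auto. intros x y Hxy. apply HF. lra. }
  pose proof (is_RInt_comp_lin (V := R_NormedModule) _ (-1) t 0 t _ (RInt_correct (V:=R_CompleteNormedModule) _ _ _ Hex)) as E.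
  replace ((-1) * 0 + t) with t in E by ring. replace ((-1) * t + t) with 0 in E by ring.
  apply (is_RInt_opp (V:=R_NormedModule)) in E.
  apply (is_RInt_ext (V:=R_NormedModule) _ (fun s => g (t - s) * Fb s)) in E.
  2: { intros x _. unfold scal, opp; simpl. unfold mult; simpl.
    replace (-1 * x + t) with (t - x) by ring. replace (t - (t - x)) with x by ring. ring. }
  apply (is_RInt_unique (V:=R_CompleteNormedModule)) in E. rewrite E.
  rewrite (RInt_swapR (fun z => g z * Fb (t - z)) t 0).
  unfold opp; simpl. apply eq_sym, Ropp_involutive.
  apply (int_cm_up g (fun z => Fb (t - z))); auto; intros x y Hxy; apply HF; lra.
Qed.

Lemma conv_cont (g Fb : R -> R) t0 : (forall x, continuous g x) ->
  (forall x y, x <= y -> Fb y <= Fb x) -> (forall x, 0 <= Fb x <= 1) ->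
  continuous (fun t => RInt (fun s => g (t - s) * Fb s) 0 t) t0.
Proof.
  intros Hg HF HF01. apply cont_eps. intros eps Heps.
  set (Rr := Rabs t0 + 1).
  destruct (cont_bounded g (-Rr) Rr) as [B [HB0 HB]]. { unfold Rr; pose proof (Rabs_pos t0); lra. }
  { intros; apply Hg. }
  set (e1 := eps / (2 * (Rabs t0 + 1))).
  assert (He1 : 0 < e1). { unfold e1. apply Rdiv_lt_0_compat; auto. pose proof (Rabs_pos t0); lra. }
  destruct (unifcont_normed_1d (K := R_AbsRing) (V := R_NormedModule) g (-Rr) Rr (fun x _ => Hg x) (mkposreal e1 He1)) as [d1 Hd1].
  set (d := Rmin 1 (Rmin d1 (eps / (2 * (B + 1))))).
  assert (Hd : 0 < d). { unfold d. apply Rmin_pos. lra. apply Rmin_pos. apply cond_pos.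
    apply Rdiv_lt_0_compat; lra. }
  exists d. split; auto. intros t Ht.
  assert (Hd1' : d <= 1) by apply Rmin_l.
  assert (Hd2 : d <= d1) by (unfold d; eapply Rle_trans; [apply Rmin_r|apply Rmin_l]).
  assert (Hd3 : d <= eps / (2 * (B + 1))) by (unfold d; eapply Rle_trans; [apply Rmin_r|apply Rmin_r]).
  set (k1 := fun s => g (t - s) * Fb s).
  set (k0 := fun s => g (t0 - s) * Fb s).
  assert (I1 : forall a b, ex_RInt k1 a b). { intros; apply int_cm; auto; apply cont_shift; auto. }
  assert (I0 : forall a b, ex_RInt k0 a b). { intros; apply int_cm; auto; apply cont_shift; auto. }
  change (Rabs (RInt k1 0 t - RInt k0 0 t0) < eps).
  rewrite <- (RInt_Chasles k1 0 t0 t) by auto.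
  replace (plus (RInt k1 0 t0) (RInt k1 t0 t) - RInt k0 0 t0)
    with (RInt k1 t0 t + (RInt k1 0 t0 - RInt k0 0 t0)) by (unfold plus; simpl; ring).
  rewrite <- (RInt_minus (V := R_CompleteNormedModule)) by auto.
  eapply Rle_lt_trans. apply Rabs_triang.
  assert (Ht01 : Rabs (t - t0) < 1) by lra.
  assert (A1 : Rabs (RInt k1 t0 t) <= Rabs (t - t0) * B).
  { apply abs_RInt_le_const'. auto. intros s Hs. unfold k1. rewrite Rabs_mult.
    rewrite <- (Rmult_1_r B). apply Rmult_le_compat; try apply Rabs_pos.
    apply HB. unfold Rmin, Rmax in Hs. destruct Rle_dec; unfold Rr;
    unfold Rabs in *; repeat destruct Rcase_abs; lra.
    rewrite Rabs_right; apply HF01 || (apply Rle_ge; apply HF01). }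
  assert (A2 : Rabs (RInt (fun s => minus (k1 s) (k0 s)) 0 t0) <= Rabs (t0 - 0) * e1).
  { apply abs_RInt_le_const'. apply (ex_RInt_minus (V:=R_NormedModule)); auto.
    intros s Hs. unfold k1, k0, minus, plus, opp; simpl.
    replace (g (t - s) * Fb s + - (g (t0 - s) * Fb s)) with ((g (t - s) - g (t0 - s)) * Fb s) by ring.
    rewrite Rabs_mult. rewrite <- (Rmult_1_r e1). apply Rmult_le_compat; try apply Rabs_pos.
    assert (Hin : forall x, Rmin 0 t0 <= x <= Rmax 0 t0 -> -Rr <= x <= Rr).
    { intros x Hx. unfold Rmin, Rmax in Hx; destruct Rle_dec; unfold Rr;
      unfold Rabs in *; repeat destruct Rcase_abs; lra. }
    assert (Hu := Hd1 (t0 - s) (t - s)). 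
    left. specialize (Hu ltac:(unfold Rmin, Rmax in Hs; destruct Rle_dec; unfold Rr;
      unfold Rabs in *; repeat destruct Rcase_abs; lra)
      ltac:(unfold Rmin, Rmax in Hs; destruct Rle_dec; unfold Rr;
      unfold Rabs in *; repeat destruct Rcase_abs; lra)).
    assert (ball (t0 - s) d1 (t - s)). { apply ball_R. replace (t - s - (t0 - s)) with (t - t0) by ring. lra. }
    specialize (Hu H). unfold ball_norm in Hu. simpl in Hu. exact Hu.
    rewrite Rabs_right; apply HF01 || (apply Rle_ge; apply HF01). }
  assert (Hdd : Rabs (t - t0) * B < eps / 2).
  { apply Rle_lt_trans with (d * B). apply Rmult_le_compat_r; lra.
    apply Rle_lt_trans with (eps / (2 * (B + 1)) * B). apply Rmult_le_compat_r; lra.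
    apply (Rmult_lt_reg_r (2 * (B + 1))). lra.
    replace (eps / (2 * (B + 1)) * B * (2 * (B + 1))) with (eps * B) by (field; lra).
    replace (eps / 2 * (2 * (B + 1))) with (eps * B + eps) by (field; lra). lra. }
  assert (He : Rabs (t0 - 0) * e1 <= eps / 2).
  { unfold e1. rewrite Rminus_0_r. apply (Rmult_le_reg_r (2 * (Rabs t0 + 1))). pose proof (Rabs_pos t0); lra.
    replace (Rabs t0 * (eps / (2 * (Rabs t0 + 1))) * (2 * (Rabs t0 + 1))) with (Rabs t0 * eps) by (field; pose proof (Rabs_pos t0); lra).
    replace (eps / 2 * (2 * (Rabs t0 + 1))) with (Rabs t0 * eps + eps) by field. lra. }
  eapply Rle_lt_trans. apply Rplus_le_compat. exact A1. exact A2. lra.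
Qed.


Lemma ln_le_lin y : 0 < y -> ln y <= y - 1.
Proof. intros Hy. pose proof (exp_ineq1_le (ln y)). rewrite exp_ln in H; lra. Qed.

Lemma exp_small (alp beta : R) : 0 < alp -> exists K, 0 <= K /\
  forall t, 0 < t <= 1 -> exp (beta * ln t) * exp (- alp / t) <= K * t.
Proof.
  intros Ha.
  set (b := Rabs beta + 1).
  set (ep := alp / (2 * b)).
  assert (Hb : 0 < b) by (unfold b; pose proof (Rabs_pos beta); lra).
  assert (Hep : 0 < ep) by (unfold ep; apply Rdiv_lt_0_compat; lra).
  set (C := Rmax 0 (b * (- 1 - ln ep))).
  exists (exp C * (2 / alp)). split.
  { apply Rmult_le_pos. left; apply exp_pos. left; apply Rdiv_lt_0_compat; lra. }
  intros t Ht.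
  assert (Hlt : ln t <= 0). { destruct (Req_dec t 1). subst; rewrite ln_1; lra.
    left. rewrite <- ln_1. apply ln_increasing; lra. }
  assert (Hl2 : - ln t <= ep / t - 1 - ln ep).
  { rewrite <- ln_Rinv by lra. pose proof (ln_le_lin (ep * / t)).
    rewrite ln_mult in H by (try apply Rmult_lt_0_compat; auto; apply Rinv_0_lt_compat; lra).
    assert (0 < ep * / t) by (apply Rmult_lt_0_compat; auto; apply Rinv_0_lt_compat; lra).
    specialize (H H0). unfold Rdiv. lra. }
  assert (Hkey : beta * ln t <= alp / (2 * t) + C).
  { assert (HC1 : b * (-1 - ln ep) <= C) by apply Rmax_r.
    assert (HC0 : 0 <= C) by apply Rmax_l.
    assert (beta * ln t <= b * (- ln t)).
    { unfold b. destruct (Rle_dec 0 beta).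
      - assert (beta * ln t <= 0) by (rewrite <- (Rmult_0_r beta); apply Rmult_le_compat_l; lra).
        assert (0 <= (Rabs beta + 1) * - ln t) by (apply Rmult_le_pos; pose proof (Rabs_pos beta); lra). lra.
      - rewrite Rabs_left by lra. nra. }
    assert (b * (- ln t) <= b * (ep / t - 1 - ln ep)) by (apply Rmult_le_compat_l; lra).
    assert (b * (ep / t) = alp / (2 * t)). { unfold ep. field. lra. }
    nra. }
  rewrite <- exp_plus.
  set (x := alp / (2 * t)).
  assert (Hx : 0 < x) by (unfold x; apply Rdiv_lt_0_compat; lra).
  assert (E1 : exp (beta * ln t + - alp / t) <= exp (C + - x)).
  { assert (beta * ln t + - alp / t <= C + - x).
    { unfold x. replace (- alp / t) with (- (alp / (2 * t)) - alp / (2 * t)) by (field; lra). lra. }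
    destruct (Rle_lt_or_eq_dec _ _ H). left; apply exp_increasing; auto. rewrite e; lra. }
  rewrite (exp_plus C) in E1. rewrite exp_Ropp in E1.
  assert (E2 : / exp x <= / x).
  { apply Rinv_le_contravar; auto. pose proof (exp_ineq1_le x). lra. }
  assert (E3 : exp C * / exp x <= exp C * / x).
  { apply Rmult_le_compat_l; auto. left; apply exp_pos. }
  assert (E4 : exp C * / x = exp C * (2 / alp) * t). { unfold x. field. lra. }
  lra.
Qed.


Definition phi gam alp t := Rpower t (gam - 2) * exp (- alp / t).
Definition phit gam alp t := if Rle_dec t 0 then 0 else phi gam alp t.
Definition ww gam alp u := Rpower u gam * exp (- alp / u).
Definition wwt gam alp u := if Rle_dec u 0 then 0 else ww gam alp u.

Lemma phi_pos gam alp t : 0 < phi gam alp t.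
Proof. unfold phi, Rpower. apply Rmult_lt_0_compat; apply exp_pos. Qed.
Lemma ww_pos gam alp t : 0 < ww gam alp t.
Proof. unfold ww, Rpower. apply Rmult_lt_0_compat; apply exp_pos. Qed.
Lemma phit_nonneg gam alp t : 0 <= phit gam alp t.
Proof. unfold phit. destruct Rle_dec. lra. left; apply phi_pos. Qed.

Lemma cont_at0 (f : R -> R) K : 0 <= K -> (forall y, y <= 0 -> f y = 0) ->
  (forall y, 0 < y <= 1 -> Rabs (f y) <= K * y) -> continuous f 0.
Proof.
  intros HK H0 H1. apply cont_eps. intros eps He.
  exists (Rmin 1 (eps / (K + 1))). split. apply Rmin_pos. lra. apply Rdiv_lt_0_compat; lra.
  intros y Hy. rewrite (H0 0) by lra. rewrite Rminus_0_r in *.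
  assert (Hm1 := Rmin_l 1 (eps / (K + 1))). assert (Hm2 := Rmin_r 1 (eps / (K + 1))).
  destruct (Rle_dec y 0). rewrite H0 by auto. rewrite Rabs_R0; auto.
  rewrite (Rabs_right y) in Hy by lra.
  eapply Rle_lt_trans. apply H1. lra.
  apply Rle_lt_trans with (K * (eps / (K + 1))). apply Rmult_le_compat_l; lra.
  apply (Rmult_lt_reg_r (K + 1)). lra. replace (K * (eps / (K + 1)) * (K + 1)) with (K * eps) by (field; lra).
  nra.
Qed.

Lemma loc_pos (x : R) : 0 < x -> locally x (fun y => 0 < y).
Proof. intros Hx. exists (mkposreal x Hx). intros y Hy. change (Rabs (y - x) < x) in Hy.
  unfold Rabs in Hy; destruct (Rcase_abs (y - x)); lra. Qed.
Lemma loc_neg (x : R) : x < 0 -> locally x (fun y => y < 0).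
Proof. intros Hx. assert (0 < -x) by lra. exists (mkposreal (-x) H). intros y Hy. change (Rabs (y - x) < -x) in Hy.
  unfold Rabs in Hy; destruct (Rcase_abs (y - x)); lra. Qed.

Lemma phi_der gam alp x : 0 < x -> ex_derive (phi gam alp) x.
Proof. intros Hx. unfold phi, Rpower. auto_derive. lra. Qed.
Lemma ww_der gam alp x : 0 < x -> is_derive (ww gam alp) x ((alp + gam * x) * phi gam alp x).
Proof.
  intros Hx. unfold ww, phi, Rpower. auto_derive. lra.
  replace ((gam - 2) * ln x) with (gam * ln x + - (ln x + ln x)) by ring.
  rewrite exp_plus, exp_Ropp, exp_plus, exp_ln by lra. change (@eq R ((gam * (1 * / x) * exp (gam * ln x) * exp (- alp * / x) + exp (gam * ln x) * (- alp * (- (1) * / (x * x)) * exp (- alp * / x)))) ((alp + gam * x) * (exp (gam * ln x) * / (x * x) * exp (- alp / x)))). unfold Rdiv. field. lra.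
Qed.

Lemma small_cont (gam alp : R) (f : R -> R) beta x : 0 < alp ->
  (forall y, f y = if Rle_dec y 0 then 0 else exp (beta * ln y) * exp (- alp / y)) ->
  continuous f x.
Proof.
  intros Ha Hf. destruct (Rtotal_order x 0) as [Hx|[Hx|Hx]].
  - apply (continuous_ext_loc _ (fun _ => 0)).
    generalize (loc_neg x Hx). apply filter_imp. intros y Hy. rewrite Hf. destruct Rle_dec; lra.
    apply continuous_const.
  - subst. destruct (exp_small alp beta Ha) as [K [HK HKb]].
    apply (cont_at0 f K HK). intros y Hy; rewrite Hf; destruct Rle_dec; lra.
    intros y Hy. rewrite Hf. destruct Rle_dec. lra. rewrite Rabs_right.
    apply HKb; auto. left; apply Rmult_lt_0_compat; apply exp_pos.
  - apply (continuous_ext_loc _ (fun y => exp (beta * ln y) * exp (- alp / y))).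
    generalize (loc_pos x Hx). apply filter_imp. intros y Hy. rewrite Hf. destruct Rle_dec; lra.
    apply (ex_derive_continuous (K:=R_AbsRing) (V:=R_NormedModule)). auto_derive. lra.
Qed.

Lemma phit_cont gam alp x : 0 < alp -> continuous (phit gam alp) x.
Proof. intros Ha. apply (small_cont gam alp _ (gam - 2)); auto. Qed.
Lemma wwt_cont gam alp x : 0 < alp -> continuous (wwt gam alp) x.
Proof. intros Ha. apply (small_cont gam alp _ gam); auto. Qed.

Lemma ww_ident gam alp u : 0 < alp -> 0 < u ->
  ww gam alp u = RInt (fun t => (alp + gam * t) * phit gam alp t) 0 u.
Proof.
  intros Ha Hu.
  set (k := fun t => (alp + gam * t) * phit gam alp t).
  assert (Hk : forall x, continuous k x).
  { intros x. apply (continuous_mult (fun t => alp + gam * t)).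
    apply (continuous_plus (fun _ => alp) (fun t => gam * t)). apply continuous_const.
    apply (continuous_mult (fun _ => gam) (fun t => t)). apply continuous_const. apply continuous_id. apply phit_cont; auto. }
  assert (Hex : forall a b, ex_RInt k a b).
  { intros; apply (@ex_RInt_continuous R_CompleteNormedModule). intros; apply Hk. }
  assert (Hd : forall x, is_derive (fun x => RInt k 0 x) x (k x)).
  { intros x. apply (is_derive_RInt (V:=R_CompleteNormedModule) k (fun x => RInt k 0 x) 0 x). apply filter_forall. intros; apply (@RInt_correct R_CompleteNormedModule). apply Hex.
    apply Hk. }
  set (H := fun x => wwt gam alp x - RInt k 0 x).
  destruct (MVT_gen H 0 u (fun _ => 0)) as [c [_ Hc]].
  - intros x Hx. rewrite Rmin_left, Rmax_right in Hx by lra.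
    assert (D1 : is_derive (wwt gam alp) x ((alp + gam * x) * phi gam alp x)).
    { apply (is_derive_ext_loc (ww gam alp)). generalize (loc_pos x (proj1 Hx)). apply filter_imp.
      intros y Hy. unfold wwt. destruct Rle_dec; lra. apply ww_der; lra. }
    pose proof (is_derive_minus _ _ _ _ _ D1 (Hd x)) as D.
    replace 0 with (minus ((alp + gam * x) * phi gam alp x) (k x)). exact D.
    unfold k, phit, minus, plus, opp; simpl. destruct Rle_dec. lra. ring.
  - intros x _. apply continuity_pt_filterlim. unfold H.
    apply (continuous_minus (wwt gam alp) (fun x => RInt k 0 x)). apply wwt_cont; auto.
    apply (ex_derive_continuous (K:=R_AbsRing) (V:=R_NormedModule)). eexists; apply Hd.
  - unfold H in Hc. rewrite Rmult_0_l in Hc. rewrite RInt_point in Hc.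
    unfold wwt in Hc. destruct (Rle_dec u 0). lra. destruct (Rle_dec 0 0); [|lra].
    unfold zero in Hc; simpl in Hc. lra.
Qed.

Lemma small_pow (eps : R) : 0 < eps -> exists N, forall n, (N <= n)%nat -> (1/2) ^ n < eps.
Proof.
  intros He. destruct (pow_lt_1_zero (1/2) ltac:(rewrite Rabs_right; lra) eps He) as [N HN].
  exists N. intros n Hn. specialize (HN n Hn). rewrite Rabs_right in HN; auto.
  apply Rle_ge, pow_le; lra.
Qed.

Lemma zero_geom (a C : R) : (forall n, Rabs a <= C * (1/2) ^ n) -> a = 0.
Proof.
  intros H. destruct (Req_dec a 0); auto. exfalso.
  assert (Ha : 0 < Rabs a) by (apply Rabs_pos_lt; auto).
  assert (HC : 0 <= C). { specialize (H O). simpl in H. lra. }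
  destruct (small_pow (Rabs a / (C + 1))) as [N HN]. apply Rdiv_lt_0_compat; lra.
  specialize (HN N (le_n N)). specialize (H N).
  assert (C * (1/2)^N <= C * (Rabs a / (C + 1))). apply Rmult_le_compat_l; lra.
  assert (C * (Rabs a / (C + 1)) < Rabs a).
  { apply (Rmult_lt_reg_r (C + 1)). lra. replace (C * (Rabs a / (C + 1)) * (C + 1)) with (C * Rabs a) by (field; lra). nra. }
  lra.
Qed.

Lemma bound_at0 (f : R -> R) E u0 : 0 < u0 -> continuous f 0 ->
  (forall u, 0 < u <= u0 -> Rabs (f u) <= E) -> Rabs (f 0) <= E.
Proof.
  intros Hu0 Hf HE. destruct (Rle_dec (Rabs (f 0)) E) as [|Hn]; auto. exfalso.
  apply Rnot_le_lt in Hn.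
  destruct (cont_eps_inv f 0 Hf (Rabs (f 0) - E)) as [d [Hd Hd']]. lra.
  set (u := Rmin u0 (d / 2)).
  assert (Hu : 0 < u <= u0). { split. apply Rmin_pos; lra. apply Rmin_l. }
  assert (Hud : u <= d / 2) by apply Rmin_r.
  specialize (HE u Hu). assert (Rabs (u - 0) < d) by (rewrite Rminus_0_r, Rabs_right; lra).
  specialize (Hd' u H). pose proof (Rabs_triang_inv (f 0) (f u)).
  rewrite Rabs_minus_sym in Hd'. lra.
Qed.


Section Op.
Variable F : R -> R.
Variables gam alp mu p u0 : R.
Hypothesis HFm : forall x y, x <= y -> F x <= F y.
Hypothesis HF01 : forall x, 0 <= F x <= 1.
Hypothesis HF0 : forall eps, 0 < eps -> exists d, 0 < d /\ forall t, 0 < t < d -> F t < eps.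
Hypothesis Ha : 0 < alp.
Hypothesis Hmu : 0 < mu.
Hypothesis Hp : 0 < p.
Hypothesis Hu01 : 0 < u0 <= 1.
Hypothesis Hu0g : Rabs gam * u0 <= alp / 2.
Hypothesis Hu0m : 2 * mu * u0 / alp <= 1 / 2.

Lemma Fb_dec x y : x <= y -> Fbar F y <= Fbar F x.
Proof. intros H. unfold Fbar. specialize (HFm x y H). lra. Qed.
Lemma Fb01 x : 0 <= Fbar F x <= 1.
Proof. unfold Fbar. specialize (HF01 x). lra. Qed.

Definition Gc (g : R -> R) t := RInt (fun z => g z * Fbar F (t - z)) 0 t.
Definition Phi (g : R -> R) t := phit gam alp t * (p * Fbar F t + Gc g t).

Lemma ex_Gz (g : R -> R) t a b : (forall x, continuous g x) ->
  ex_RInt (fun z => g z * Fbar F (t - z)) a b.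
Proof.
  intros Hg. apply (int_cm_up g (fun z => Fbar F (t - z))); auto.
  intros x y Hxy. apply Fb_dec. lra.
Qed.

Lemma Gc_cont (g : R -> R) x : (forall x, continuous g x) -> continuous (Gc g) x.
Proof.
  intros Hg. apply (continuous_ext (fun t => RInt (fun s => g (t - s) * Fbar F s) 0 t)).
  intros t. unfold Gc. symmetry. apply G_alt; auto. apply Fb_dec.
  apply conv_cont; auto. apply Fb_dec. apply Fb01.
Qed.

Lemma Gc_diff (g h : R -> R) t D : (forall x, continuous g x) -> (forall x, continuous h x) ->
  0 <= t -> (forall z, 0 <= z <= t -> Rabs (g z - h z) <= D) ->
  Rabs (Gc g t - Gc h t) <= t * D.
Proof.
  intros Hg Hh Ht HD. unfold Gc.
  assert (E := RInt_minus (V:=R_CompleteNormedModule) _ _ 0 t (ex_Gz g t 0 t Hg) (ex_Gz h t 0 t Hh)).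
  unfold minus, plus, opp in E; simpl in E.
  replace (RInt (fun z : R => g z * Fbar F (t - z)) 0 t - RInt (fun z : R => h z * Fbar F (t - z)) 0 t)
    with (RInt (fun x : R => g x * Fbar F (t - x) + - (h x * Fbar F (t - x))) 0 t) by (rewrite E; reflexivity).
  replace (t * D) with ((t - 0) * D) by ring.
  apply abs_RInt_le_const; auto.
  apply (@ex_RInt_minus R_NormedModule); apply ex_Gz; auto.
  intros z Hz. replace (g z * Fbar F (t - z) + - (h z * Fbar F (t - z))) with ((g z - h z) * Fbar F (t - z)) by ring.
  rewrite Rabs_mult. rewrite <- (Rmult_1_r D). apply Rmult_le_compat; try apply Rabs_pos. auto.
  rewrite Rabs_right; apply Fb01 || (apply Rle_ge; apply Fb01).
Qed.

Lemma Gc_zero t : Gc (fun _ => 0) t = 0.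
Proof. unfold Gc. rewrite (RInt_ext _ (fun _ => 0)). rewrite RInt_const. apply Rmult_0_r.
  intros; apply Rmult_0_l. Qed.

Lemma Gc_bound (g : R -> R) t M : (forall x, continuous g x) ->
  0 <= t -> (forall z, 0 <= z <= t -> Rabs (g z) <= M) -> Rabs (Gc g t) <= t * M.
Proof.
  intros Hg Ht HM. replace (Gc g t) with (Gc g t - Gc (fun _ => 0) t) by (rewrite Gc_zero; ring).
  apply Gc_diff; auto. intros; apply continuous_const. intros z Hz. rewrite Rminus_0_r. auto.
Qed.

Lemma ex_Phi (g : R -> R) a b : (forall x, continuous g x) -> ex_RInt (Phi g) a b.
Proof.
  intros Hg. apply (ex_RInt_ext (fun t => plus (scal p (phit gam alp t * Fbar F t)) (phit gam alp t * Gc g t))).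
  intros; unfold Phi, plus, scal; simpl; unfold mult; simpl; ring.
  apply (@ex_RInt_plus R_NormedModule). apply (@ex_RInt_scal R_NormedModule).
  apply int_cm. intros; apply phit_cont; auto. apply Fb_dec.
  apply (@ex_RInt_continuous R_CompleteNormedModule). intros z _.
  apply (continuous_mult (phit gam alp) (Gc g)). apply phit_cont; auto. apply Gc_cont; auto.
Qed.

Lemma rhs_eq (g : R -> R) u : 0 < u ->
  rhs F gam alp mu p g u = mu / ww gam alp u * RInt (Phi g) 0 u.
Proof.
  intros Hu. unfold rhs, ww. f_equal. apply RInt_ext. intros x Hx.
  rewrite Rmin_left, Rmax_right in Hx by lra. unfold Phi, phit, phi, Gc.
  destruct Rle_dec. lra. reflexivity.
Qed.

Lemma ex_phit a b : ex_RInt (phit gam alp) a b.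
Proof. apply (@ex_RInt_continuous R_CompleteNormedModule). intros; apply phit_cont; auto. Qed.

Lemma int_phit u : 0 < u <= u0 ->
  0 <= RInt (phit gam alp) 0 u <= 2 / alp * ww gam alp u.
Proof.
  intros Hu. split.
  - assert (H0 : RInt (fun _ : R => 0) 0 u = 0) by (rewrite RInt_const; apply Rmult_0_r).
    apply Rle_trans with (RInt (fun _ => 0) 0 u). right; rewrite H0; reflexivity.
    apply RInt_le. lra. apply ex_RInt_const. apply ex_phit. intros; apply phit_nonneg.
  - rewrite (ww_ident gam alp u Ha (proj1 Hu)).
    assert (Hle : RInt (fun t => alp / 2 * phit gam alp t) 0 u <=
                  RInt (fun t => (alp + gam * t) * phit gam alp t) 0 u).
    { apply RInt_le. lra.
      apply (ex_RInt_ext (fun t => scal (alp/2) (phit gam alp t))). intros; reflexivity.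
      apply (@ex_RInt_scal R_NormedModule). apply ex_phit.
      apply (@ex_RInt_continuous R_CompleteNormedModule). intros z _.
      apply (continuous_mult (fun t => alp + gam * t)).
      apply (continuous_plus (fun _ => alp) (fun t => gam * t)). apply continuous_const.
      apply (continuous_mult (fun _ => gam) (fun t => t)). apply continuous_const. apply continuous_id.
      apply phit_cont; auto.
      intros x Hx. apply Rmult_le_compat_r. apply phit_nonneg.
      assert (Rabs (gam * x) <= alp / 2).
      { rewrite Rabs_mult. apply Rle_trans with (Rabs gam * u0); auto.
        apply Rmult_le_compat_l. apply Rabs_pos. rewrite Rabs_right; lra. }
      unfold Rabs in H; destruct Rcase_abs; lra. }
    assert (E : RInt (fun t => alp / 2 * phit gam alp t) 0 u = alp / 2 * RInt (phit gam alp) 0 u).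
    { apply (RInt_scal (V:=R_CompleteNormedModule) (phit gam alp) 0 u (alp/2)). apply ex_phit. }
    rewrite E in Hle.
    apply (Rmult_le_reg_l (alp / 2)). lra.
    assert (Hx : forall I : R, alp / 2 * (2 / alp * I) = I) by (intros; field; lra).
    rewrite Hx. lra.
Qed.


Lemma RInt_scalR (f : R -> R) a b k : ex_RInt f a b -> RInt (fun t => k * f t) a b = k * RInt f a b.
Proof. intros H. apply (RInt_scal (V:=R_CompleteNormedModule) f a b k H). Qed.

Lemma RInt_minusR (f g : R -> R) a b : ex_RInt f a b -> ex_RInt g a b ->
  RInt (fun t => f t - g t) a b = RInt f a b - RInt g a b.
Proof. intros H1 H2. apply (RInt_minus (V:=R_CompleteNormedModule) f g a b H1 H2). Qed.

Lemma contr (g h : R -> R) D u : (forall x, continuous g x) -> (forall x, continuous h x) ->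
  0 < u <= u0 -> (forall z, 0 <= z <= u0 -> Rabs (g z - h z) <= D) ->
  Rabs (rhs F gam alp mu p g u - rhs F gam alp mu p h u) <= D / 2.
Proof.
  intros Hg Hh Hu HD.
  assert (HD0 : 0 <= D) by (eapply Rle_trans; [apply Rabs_pos | apply (HD 0); lra]).
  rewrite !rhs_eq by lra.
  set (W := ww gam alp u). assert (HW : 0 < W) by apply ww_pos.
  set (K := fun t => phit gam alp t * (Gc g t - Gc h t)).
  assert (HK : ex_RInt K 0 u).
  { apply (ex_RInt_extR (fun t => Phi g t - Phi h t)). intros; unfold K, Phi; ring.
    apply (@ex_RInt_minus R_NormedModule); apply ex_Phi; auto. }
  assert (E : RInt (Phi g) 0 u - RInt (Phi h) 0 u = RInt K 0 u).
  { rewrite <- RInt_minusR by (apply ex_Phi; auto). apply RInt_extR. intros; unfold K, Phi; ring. }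
  destruct (int_phit u Hu) as [J0 J1].
  assert (Hb : forall t, 0 < t < u -> Rabs (Gc g t - Gc h t) <= u * D).
  { intros t Ht. eapply Rle_trans. apply Gc_diff; auto. lra. intros; apply HD; lra.
    apply Rmult_le_compat_r; lra. }
  assert (U1 : RInt K 0 u <= u * D * RInt (phit gam alp) 0 u).
  { rewrite <- RInt_scalR by apply ex_phit. apply RInt_le. lra. auto.
    apply (ex_RInt_ext (fun t => scal (u * D) (phit gam alp t))). intros; reflexivity.
    apply (@ex_RInt_scal R_NormedModule). apply ex_phit.
    intros t Ht. unfold K. pose proof (phit_nonneg gam alp t).
    specialize (Hb t Ht). unfold Rabs in Hb; destruct Rcase_abs; nra. }
  assert (U2 : - (u * D * RInt (phit gam alp) 0 u) <= RInt K 0 u).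
  { rewrite Ropp_mult_distr_l. rewrite <- RInt_scalR by apply ex_phit. apply RInt_le. lra.
    apply (ex_RInt_ext (fun t => scal (- (u * D)) (phit gam alp t))). intros; reflexivity.
    apply (@ex_RInt_scal R_NormedModule). apply ex_phit. auto.
    intros t Ht. unfold K. pose proof (phit_nonneg gam alp t).
    specialize (Hb t Ht). unfold Rabs in Hb; destruct Rcase_abs; nra. }
  assert (Ediff : mu / W * RInt (Phi g) 0 u - mu / W * RInt (Phi h) 0 u = mu / W * RInt K 0 u).
  { rewrite <- E. ring. }
  rewrite Ediff. rewrite Rabs_mult. rewrite (Rabs_right (mu / W)) by (left; apply Rdiv_lt_0_compat; lra).
  assert (A1 : Rabs (RInt K 0 u) <= u * D * (2 / alp * W)).
  { apply Rle_trans with (u * D * RInt (phit gam alp) 0 u).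
    unfold Rabs; destruct Rcase_abs; lra.
    apply Rmult_le_compat_l. apply Rmult_le_pos; lra. exact J1. }
  apply Rle_trans with (mu / W * (u * D * (2 / alp * W))).
  apply Rmult_le_compat_l. left; apply Rdiv_lt_0_compat; lra. exact A1.
  replace (mu / W * (u * D * (2 / alp * W))) with ((2 * mu * u / alp) * D) by (field; lra).
  apply Rle_trans with ((1/2) * D). apply Rmult_le_compat_r; auto.
  apply Rle_trans with (2 * mu * u0 / alp); auto. unfold Rdiv. apply Rmult_le_compat_r.
  left; apply Rinv_0_lt_compat; lra. apply Rmult_le_compat_l; lra. lra.
Qed.

Definition Lc := mu * p / alp.

Lemma kcont x : continuous (fun t => (alp + gam * t) * phit gam alp t) x.
Proof.
  apply (continuous_mult (fun t => alp + gam * t)).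
  apply (continuous_plus (fun _ => alp) (fun t => gam * t)). apply continuous_const.
  apply (continuous_mult (fun _ => gam) (fun t => t)). apply continuous_const. apply continuous_id.
  apply phit_cont; auto.
Qed.

Lemma rhs_lim (g : R -> R) : (forall x, continuous g x) ->
  forall eps, 0 < eps -> exists d, 0 < d /\ forall u, 0 < u < d -> u <= u0 ->
    Rabs (rhs F gam alp mu p g u - Lc) < eps.
Proof.
  intros Hg eps Heps.
  destruct (cont_bounded g 0 u0) as [M [HM0 HM]]. lra. intros; apply Hg.
  set (eta := eps * alp / (4 * mu)).
  assert (Heta : 0 < eta) by (unfold eta; apply Rdiv_lt_0_compat; nra).
  destruct (HF0 (eta / (3 * p))) as [d1 [Hd1 HFd]]. apply Rdiv_lt_0_compat; lra.
  set (d2 := eta / (3 * (M + 1))).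
  set (d3 := eta * alp / (3 * p * (Rabs gam + 1))).
  assert (Hd2 : 0 < d2) by (unfold d2; apply Rdiv_lt_0_compat; lra).
  assert (Hd3 : 0 < d3) by (unfold d3; apply Rdiv_lt_0_compat; [nra|]; pose proof (Rabs_pos gam); nra).
  exists (Rmin d1 (Rmin d2 d3)). split. apply Rmin_pos; auto. apply Rmin_pos; auto.
  intros u Hu Hu0.
  assert (Hud1 : u < d1) by (eapply Rlt_le_trans; [apply Hu | apply Rmin_l]).
  assert (Hud2 : u < d2) by (eapply Rlt_le_trans; [apply Hu | eapply Rle_trans; [apply Rmin_r | apply Rmin_l]]).
  assert (Hud3 : u < d3) by (eapply Rlt_le_trans; [apply Hu | eapply Rle_trans; [apply Rmin_r | apply Rmin_r]]).
  rewrite rhs_eq by lra.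
  set (W := ww gam alp u). assert (HW : 0 < W) by apply ww_pos.
  set (k := fun t => (alp + gam * t) * phit gam alp t).
  assert (Hk : ex_RInt k 0 u).
  { apply (@ex_RInt_continuous R_CompleteNormedModule). intros; apply kcont. }
  assert (EW : W = RInt k 0 u) by (apply ww_ident; lra).
  set (Q := fun t => Phi g t - p / alp * k t).
  assert (HQ : ex_RInt Q 0 u).
  { apply (@ex_RInt_minus R_NormedModule). apply ex_Phi; auto.
    apply (ex_RInt_extR (fun t => scal (p / alp) (k t))). intros; reflexivity.
    apply (@ex_RInt_scal R_NormedModule). auto. }
  assert (EQ : RInt Q 0 u = RInt (Phi g) 0 u - p / alp * W).
  { unfold Q. rewrite RInt_minusR. rewrite RInt_scalR. rewrite EW. reflexivity. auto.
    apply ex_Phi; auto. apply (ex_RInt_extR (fun t => scal (p / alp) (k t))). intros; reflexivity.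
    apply (@ex_RInt_scal R_NormedModule). auto. }
  assert (Hpt : forall t, 0 < t < u -> Rabs (p * Fbar F t + Gc g t - p - p / alp * (gam * t)) <= eta).
  { intros t Ht.
    assert (T1 : Rabs (Gc g t) <= t * M). { apply Gc_bound; auto. lra. intros; apply HM; lra. }
    assert (T2 : F t < eta / (3 * p)) by (apply HFd; lra).
    assert (T3 : 0 <= F t) by apply HF01.
    assert (T4 : t * M <= eta / 3).
    { apply Rle_trans with (d2 * (M + 1)). apply Rmult_le_compat; lra.
      unfold d2. right; field; lra. }
    assert (T5 : Rabs (p / alp * (gam * t)) <= eta / 3).
    { rewrite Rabs_mult, Rabs_mult. rewrite (Rabs_right (p/alp)) by (left; apply Rdiv_lt_0_compat; lra).
      rewrite (Rabs_right t) by lra.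
      apply Rle_trans with (p / alp * ((Rabs gam + 1) * d3)).
      apply Rmult_le_compat_l. left; apply Rdiv_lt_0_compat; lra.
      apply Rmult_le_compat; try apply Rabs_pos; lra.
      unfold d3. right. pose proof (Rabs_pos gam). field. repeat split; try lra. }
    unfold Fbar.
    replace (p * (1 - F t) + Gc g t - p - p / alp * (gam * t)) with (- (p * F t) + Gc g t - p / alp * (gam * t)) by ring.
    assert (p * F t <= eta / 3).
    { apply Rle_trans with (p * (eta / (3 * p))). apply Rmult_le_compat_l; lra. right; field; lra. }
    revert T1 T5. unfold Rabs. repeat destruct Rcase_abs; nra. }
  assert (Hb : forall t, 0 < t < u -> - eta * phit gam alp t <= Q t <= eta * phit gam alp t).
  { intros t Ht. specialize (Hpt t Ht). pose proof (phit_nonneg gam alp t).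
    unfold Q, Phi, k.
    replace (phit gam alp t * (p * Fbar F t + Gc g t) - p / alp * ((alp + gam * t) * phit gam alp t))
      with (phit gam alp t * (p * Fbar F t + Gc g t - p - p / alp * (gam * t))) by (field; lra).
    revert Hpt. unfold Rabs. destruct Rcase_abs; nra. }
  destruct (int_phit u (conj (proj1 Hu) Hu0)) as [J0 J1].
  assert (U1 : RInt Q 0 u <= eta * RInt (phit gam alp) 0 u).
  { rewrite <- RInt_scalR by apply ex_phit. apply RInt_le. lra. auto.
    apply (ex_RInt_extR (fun t => scal eta (phit gam alp t))). intros; reflexivity.
    apply (@ex_RInt_scal R_NormedModule). apply ex_phit.
    intros t Ht. apply Hb; auto. }
  assert (U2 : - eta * RInt (phit gam alp) 0 u <= RInt Q 0 u).
  { rewrite <- RInt_scalR by apply ex_phit. apply RInt_le. lra.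
    apply (ex_RInt_extR (fun t => scal (- eta) (phit gam alp t))). intros; reflexivity.
    apply (@ex_RInt_scal R_NormedModule). apply ex_phit. auto.
    intros t Ht. apply Hb; auto. }
  assert (Ed : mu / W * RInt (Phi g) 0 u - Lc = mu / W * RInt Q 0 u).
  { rewrite EQ. unfold Lc. field. split; lra. }
  rewrite Ed. rewrite Rabs_mult. rewrite (Rabs_right (mu / W)) by (left; apply Rdiv_lt_0_compat; lra).
  assert (A1 : Rabs (RInt Q 0 u) <= eta * (2 / alp * W)).
  { apply Rle_trans with (eta * RInt (phit gam alp) 0 u).
    unfold Rabs; destruct Rcase_abs; lra.
    apply Rmult_le_compat_l. lra. exact J1. }
  apply Rle_lt_trans with (mu / W * (eta * (2 / alp * W))).
  apply Rmult_le_compat_l. left; apply Rdiv_lt_0_compat; lra. exact A1.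
  replace (mu / W * (eta * (2 / alp * W))) with (eps / 2) by (unfold eta; field; lra). lra.
Qed.

Lemma Icont (g : R -> R) y0 : (forall x, continuous g x) ->
  continuous (fun y => RInt (Phi g) 0 y) y0.
Proof.
  intros Hg.
  destruct (cont_bounded (phit gam alp) (y0 - 1) (y0 + 1)) as [B1 [HB1 HB1']]. lra.
  intros; apply phit_cont; auto.
  destruct (cont_bounded (Gc g) (y0 - 1) (y0 + 1)) as [B2 [HB2 HB2']]. lra.
  intros; apply Gc_cont; auto.
  set (B := B1 * (p + B2)).
  assert (HB : 0 <= B) by (unfold B; apply Rmult_le_pos; lra).
  apply cont_eps. intros eps Heps.
  exists (Rmin 1 (eps / (B + 1))). split. apply Rmin_pos; [lra|apply Rdiv_lt_0_compat; lra].
  intros y Hy.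
  assert (Hy1 : Rabs (y - y0) < 1) by (eapply Rlt_le_trans; [apply Hy|apply Rmin_l]).
  assert (Hy2 : Rabs (y - y0) < eps / (B + 1)) by (eapply Rlt_le_trans; [apply Hy|apply Rmin_r]).
  assert (E : RInt (Phi g) 0 y - RInt (Phi g) 0 y0 = RInt (Phi g) y0 y).
  { rewrite <- (RInt_Chasles (V:=R_CompleteNormedModule) (Phi g) 0 y0 y) by (apply ex_Phi; auto).
    unfold plus; simpl; ring. }
  rewrite E.
  eapply Rle_lt_trans. apply abs_RInt_le_const' with (M := B). apply ex_Phi; auto.
  intros t Ht.
  assert (Ht' : y0 - 1 <= t <= y0 + 1).
  { unfold Rmin, Rmax in Ht; destruct Rle_dec; unfold Rabs in Hy1; destruct Rcase_abs; lra. }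
  unfold Phi, B. rewrite Rabs_mult. apply Rmult_le_compat; try apply Rabs_pos. auto.
  eapply Rle_trans. apply Rabs_triang. apply Rplus_le_compat; auto.
  rewrite Rabs_mult, (Rabs_right p) by lra. rewrite <- (Rmult_1_r p) at 2.
  apply Rmult_le_compat_l. lra. rewrite Rabs_right; apply Fb01 || (apply Rle_ge; apply Fb01).
  apply Rle_lt_trans with ((eps / (B + 1)) * B). apply Rmult_le_compat_r; lra.
  apply (Rmult_lt_reg_r (B + 1)). lra. replace (eps / (B + 1) * B * (B + 1)) with (eps * B) by (field; lra).
  nra.
Qed.

Lemma rhs_cont (g : R -> R) y0 : (forall x, continuous g x) -> 0 < y0 ->
  continuous (rhs F gam alp mu p g) y0.
Proof.
  intros Hg Hy0.
  apply (continuous_ext_loc _ (fun y => (mu / (exp (gam * ln y) * exp (- alp / y))) * RInt (Phi g) 0 y)).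
  generalize (loc_pos y0 Hy0). apply filter_imp. intros y Hy. rewrite rhs_eq by auto. reflexivity.
  apply (continuous_mult (fun y => mu / (exp (gam * ln y) * exp (- alp / y)))).
  apply (ex_derive_continuous (K:=R_AbsRing) (V:=R_NormedModule)). auto_derive.
  repeat split; try lra. apply Rgt_not_eq. apply Rmult_lt_0_compat; apply exp_pos.
  apply Icont; auto.
Qed.

Lemma within_of_loc (f : R -> R) (D : R -> Prop) x : continuous f x ->
  filterlim f (within D (locally x)) (locally (f x)).
Proof.
  intros H P HP. specialize (H P HP). unfold within. unfold filtermap in *.
  apply (filter_imp (fun y => P (f y)) (fun y => D y -> P (f y)) (F := locally x) (fun y Hy _ => Hy) H).
Qed.

Definition Rg (g : R -> R) y := if Rle_dec y 0 then Lc else rhs F gam alp mu p g y.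
Definition Te (g : R -> R) x := Rg g (clamp 0 u0 x).

Lemma Rg_closed (g : R -> R) : (forall x, continuous g x) -> continuous_on_closed 0 u0 (Rg g).
Proof.
  intros Hg x Hx. destruct (Rle_dec x 0) as [Hx0|Hx0].
  - assert (x = 0) by lra. subst x.
    apply filterlim_locally. intros eps. destruct (rhs_lim g Hg eps (cond_pos eps)) as [d [Hd Hd']].
    exists (mkposreal d Hd). intros y Hy Dy. change (Rabs (y - 0) < d) in Hy.
    change (Rabs (Rg g y - Rg g 0) < eps). unfold Rg at 2. destruct (Rle_dec 0 0); [|lra].
    unfold Rg. destruct Rle_dec. unfold Rminus; rewrite Rplus_opp_r, Rabs_R0; apply cond_pos.
    apply Hd'. rewrite Rminus_0_r in Hy. unfold Rabs in Hy; destruct Rcase_abs; lra. lra.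
  - apply within_of_loc.
    apply (continuous_ext_loc _ (rhs F gam alp mu p g)).
    generalize (loc_pos x (Rnot_le_lt _ _ Hx0)). apply filter_imp. intros y Hy. unfold Rg.
    destruct Rle_dec; lra. apply rhs_cont; auto. lra.
Qed.

Lemma clamp_closed (h : R -> R) x : continuous_on_closed 0 u0 h ->
  continuous (fun x => h (clamp 0 u0 x)) x.
Proof.
  intros Hh. unfold continuous.
  apply (filterlim_comp _ _ _ (clamp 0 u0) h (locally x)
          (within (fun y => 0 <= y <= u0) (locally (clamp 0 u0 x)))).
  - intros P HP. unfold within in HP.
    assert (C := clamp_cont 0 u0 x (Rlt_le _ _ (proj1 Hu01))).
    specialize (C _ HP). unfold filtermap in *.
    apply (filter_imp (fun y => 0 <= clamp 0 u0 y <= u0 -> P (clamp 0 u0 y)) _ (F := locally x)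
      (fun y Hy => Hy (clamp_in 0 u0 y (Rlt_le _ _ (proj1 Hu01)))) C).
  - apply Hh. apply clamp_in. lra.
Qed.

Lemma Te_cont (g : R -> R) x : (forall x, continuous g x) -> continuous (Te g) x.
Proof. intros Hg. apply clamp_closed. apply Rg_closed; auto. Qed.

Lemma Te_eq (g : R -> R) x : 0 < x <= u0 -> Te g x = rhs F gam alp mu p g x.
Proof. intros Hx. unfold Te, Rg. rewrite clamp_id by lra. destruct Rle_dec; [lra|reflexivity]. Qed.

Lemma Te_0 (g : R -> R) : Te g 0 = Lc.
Proof. unfold Te, Rg. rewrite clamp_id by lra. destruct Rle_dec; [reflexivity|lra]. Qed.

Lemma Te_diff (g h : R -> R) D : (forall x, continuous g x) -> (forall x, continuous h x) ->
  (forall z, 0 <= z <= u0 -> Rabs (g z - h z) <= D) ->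
  forall x, Rabs (Te g x - Te h x) <= D / 2.
Proof.
  intros Hg Hh HD x.
  assert (HD0 : 0 <= D) by (eapply Rle_trans; [apply Rabs_pos | apply (HD 0); lra]).
  unfold Te, Rg. destruct (clamp_in 0 u0 x) as [C1 C2]. lra.
  destruct Rle_dec. unfold Rminus; rewrite Rplus_opp_r, Rabs_R0; lra.
  apply contr; auto. lra.
Qed.

Fixpoint it (n : nat) : R -> R := match n with O => fun _ => Lc | S n => Te (it n) end.

Lemma it_cont n x : continuous (it n) x.
Proof. revert x; induction n as [|n IH]; intros x; simpl. apply continuous_const. apply Te_cont; auto. Qed.

Lemma Te_clamp (g : R -> R) x : Te g x = Te g (clamp 0 u0 x).
Proof. unfold Te. rewrite (clamp_id 0 u0 (clamp 0 u0 x)); auto. apply clamp_in; lra. Qed.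

Lemma rhs_ext (g h : R -> R) u : 0 < u -> (forall z, 0 <= z <= u -> g z = h z) ->
  rhs F gam alp mu p g u = rhs F gam alp mu p h u.
Proof.
  intros Hu H. unfold rhs. f_equal. apply RInt_extR. intros t Ht.
  rewrite Rmin_left, Rmax_right in Ht by lra. f_equal. f_equal.
  apply RInt_extR. intros z Hz. rewrite Rmin_left, Rmax_right in Hz by lra.
  rewrite H by lra. reflexivity.
Qed.

Lemma main_op : exists g : R -> R,
  continuous_on_closed 0 u0 g /\ (forall u, 0 < u <= u0 -> g u = rhs F gam alp mu p g u) /\
  (forall h : R -> R, continuous_on_closed 0 u0 h /\ (forall u, 0 < u <= u0 -> h u = rhs F gam alp mu p h u) ->
     forall x, 0 <= x <= u0 -> h x = g x) /\ g 0 = Lc.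
Proof.
  destruct (cont_bounded (fun z => it 1 z - it 0 z) 0 u0) as [D0 [HD0 HD0']]. lra.
  { intros x _. apply (continuous_minus (it 1) (it 0)); apply it_cont. }
  assert (Hstep : forall n x, Rabs (it (S n) x - it n x) <= D0 * (1/2) ^ n).
  { induction n as [|n IH]; intros x.
    - simpl. rewrite Rmult_1_r. change (Rabs (Te (it 0) x - it 0 x) <= D0).
      rewrite Te_clamp. change (Rabs (it 1 (clamp 0 u0 x) - it 0 (clamp 0 u0 x)) <= D0).
      apply HD0'. apply clamp_in; lra.
    - change (Rabs (Te (it (S n)) x - Te (it n) x) <= D0 * (1 / 2) ^ S n).
      replace (D0 * (1 / 2) ^ S n) with ((D0 * (1/2) ^ n) / 2) by (simpl; field).
      apply Te_diff; try apply it_cont. intros; apply IH. }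
  assert (Hcau : forall n k x, Rabs (it (n + k) x - it n x) <= 2 * D0 * ((1/2) ^ n - (1/2) ^ (n + k))).
  { intros n k x. induction k as [|k IH].
    - rewrite Nat.add_0_r. unfold Rminus; rewrite !Rplus_opp_r, Rabs_R0. lra.
    - rewrite Nat.add_succ_r.
      replace (it (S (n + k)) x - it n x) with ((it (S (n + k)) x - it (n + k) x) + (it (n + k) x - it n x)) by ring.
      eapply Rle_trans. apply Rabs_triang.
      specialize (Hstep (n + k)%nat x).
      replace (2 * D0 * ((1 / 2) ^ n - (1 / 2) ^ S (n + k))) with
        (D0 * (1/2) ^ (n + k) + 2 * D0 * ((1 / 2) ^ n - (1 / 2) ^ (n + k))) by (simpl; field).
      lra. }
  assert (Hcau' : forall n k x, Rabs (it (n + k) x - it n x) <= 2 * D0 * (1/2) ^ n).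
  { intros n k x. eapply Rle_trans. apply Hcau. apply Rmult_le_compat_l. lra.
    pose proof (pow_le (1/2) (n + k) ltac:(lra)). lra. }
  assert (Hex : forall x, ex_finite_lim_seq (fun n => it n x)).
  { intros x. apply ex_lim_seq_cauchy_corr. intros eps.
    destruct (small_pow (eps / (4 * D0 + 1))) as [N HN]. apply Rdiv_lt_0_compat. apply cond_pos. lra.
    exists N. intros n m Hn Hm.
    assert (A1 := Hcau' N (n - N)%nat x). assert (A2 := Hcau' N (m - N)%nat x).
    replace (N + (n - N))%nat with n in A1 by lia. replace (N + (m - N))%nat with m in A2 by lia.
    specialize (HN N (le_n N)).
    assert (4 * D0 * (1/2)^N <= 4 * D0 * (eps / (4 * D0 + 1))) by (apply Rmult_le_compat_l; lra).
    assert (4 * D0 * (eps / (4 * D0 + 1)) < eps).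
    { apply (Rmult_lt_reg_r (4 * D0 + 1)). lra.
      replace (4 * D0 * (eps / (4 * D0 + 1)) * (4 * D0 + 1)) with (4 * D0 * eps) by (field; lra).
      pose proof (cond_pos eps). nra. }
    replace (it n x - it m x) with ((it n x - it N x) - (it m x - it N x)) by ring.
    eapply Rle_lt_trans. apply Rabs_triang. rewrite Rabs_Ropp. lra. }
  set (g := fun x => real (Lim_seq (fun n => it n x))).
  assert (Hlim : forall x, is_lim_seq (fun n => it n x) (g x)).
  { intros x. unfold g. destruct (Hex x) as [l Hl]. rewrite (is_lim_seq_unique _ _ Hl). simpl. exact Hl. }
  assert (Hunif : forall n x, Rabs (it n x - g x) <= 2 * D0 * (1/2) ^ n).
  { intros n x.
    assert (L1 : is_lim_seq (fun k => it (k + n) x) (g x)) by (apply (proj1 (is_lim_seq_incr_n (fun k => it k x) n (g x))); apply Hlim).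
    assert (B : forall k, Rabs (it (k + n) x - it n x) <= 2 * D0 * (1/2) ^ n).
    { intros k. rewrite Nat.add_comm. apply Hcau'. }
    assert (Lo := is_lim_seq_le (fun _ => it n x - 2 * D0 * (1/2) ^ n) (fun k => it (k + n) x) _ _
                   (fun k => ltac:(specialize (B k); unfold Rabs in B; destruct Rcase_abs; lra))
                   (is_lim_seq_const _) L1).
    assert (Hi := is_lim_seq_le (fun k => it (k + n) x) (fun _ => it n x + 2 * D0 * (1/2) ^ n) _ _
                   (fun k => ltac:(specialize (B k); unfold Rabs in B; destruct Rcase_abs; lra))
                   L1 (is_lim_seq_const _)).
    simpl in Lo, Hi. unfold Rabs; destruct Rcase_abs; lra. }
  assert (Hgc : forall x, continuous g x).
  { intros x. apply cont_eps. intros eps Heps.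
    destruct (small_pow (eps / (3 * (2 * D0 + 1)))) as [N HN]. apply Rdiv_lt_0_compat; lra.
    specialize (HN N (le_n N)).
    assert (Hsm : 2 * D0 * (1/2) ^ N < eps / 3).
    { apply Rle_lt_trans with (2 * D0 * (eps / (3 * (2 * D0 + 1)))). apply Rmult_le_compat_l; lra.
      apply (Rmult_lt_reg_r (3 * (2 * D0 + 1))). lra.
      replace (2 * D0 * (eps / (3 * (2 * D0 + 1))) * (3 * (2 * D0 + 1))) with (2 * D0 * eps) by (field; lra).
      replace (eps / 3 * (3 * (2 * D0 + 1))) with (2 * D0 * eps + eps) by field. lra. }
    destruct (cont_eps_inv (it N) x (it_cont N x) (eps / 3)) as [d [Hd Hd']]. lra.
    exists d. split; auto. intros y Hy.
    specialize (Hd' y Hy). pose proof (Hunif N x). pose proof (Hunif N y).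
    replace (g y - g x) with ((g y - it N y) + (it N y - it N x) + (it N x - g x)) by ring.
    eapply Rle_lt_trans. apply Rabs_triang. eapply Rle_lt_trans. apply Rplus_le_compat_r. apply Rabs_triang.
    rewrite (Rabs_minus_sym (g y)). lra. }
  assert (Hfix : forall x, Te g x = g x).
  { intros x. apply Rminus_diag_uniq. apply (zero_geom _ (4 * D0)). intros n.
    replace (Te g x - g x) with ((Te g x - it (S n) x) + (it (S n) x - g x)) by ring.
    eapply Rle_trans. apply Rabs_triang.
    assert (A1 : Rabs (Te g x - Te (it n) x) <= (2 * D0 * (1/2) ^ n) / 2).
    { apply Te_diff; auto. apply it_cont. intros z _. rewrite Rabs_minus_sym. apply Hunif. }
    change (it (S n) x) with (Te (it n) x). pose proof (Hunif (S n) x).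
    assert (0 <= D0 * (1/2)^n) by (apply Rmult_le_pos; [lra| apply pow_le; lra]).
    simpl in H. lra. }
  exists g. split; [|split; [|split]].
  - intros x Hx. apply within_of_loc. auto.
  - intros u Hu. rewrite <- (Hfix u). apply Te_eq; auto.
  - intros h [Hh1 Hh2] x Hx.
    set (hh := fun x => h (clamp 0 u0 x)).
    assert (Hhc : forall x, continuous hh x) by (intros; apply clamp_closed; auto).
    assert (Hhh : forall z, 0 <= z <= u0 -> hh z = h z) by (intros; unfold hh; rewrite clamp_id; auto).
    destruct (cont_bounded (fun z => hh z - g z) 0 u0) as [D [HD HD']]. lra.
    { intros z _. apply (continuous_minus hh g); auto. }
    assert (Hit : forall n z, 0 <= z <= u0 -> Rabs (hh z - g z) <= D * (1/2) ^ n).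
    { induction n as [|n IH].
      - intros z Hz. simpl. rewrite Rmult_1_r. auto.
      - assert (Hpos : forall u, 0 < u <= u0 -> Rabs (hh u - g u) <= D * (1/2) ^ S n).
        { intros u Hu. rewrite Hhh by lra. rewrite Hh2 by auto. rewrite <- (Hfix u). rewrite Te_eq by auto.
          rewrite (rhs_ext h hh) by (try lra; intros; rewrite Hhh; auto; lra).
          replace (D * (1 / 2) ^ S n) with ((D * (1/2) ^ n) / 2) by (simpl; field).
          apply contr; auto. }
        intros z Hz. destruct (Rle_dec z 0).
        + assert (z = 0) by lra. subst z.
          apply (bound_at0 (fun z => hh z - g z) _ u0). lra.
          apply (continuous_minus hh g); auto. auto.
        + apply Hpos; lra. }
    rewrite <- (Hhh x Hx). apply Rminus_diag_uniq. apply (zero_geom _ D). intros n. apply Hit; auto.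
  - rewrite <- (Hfix 0). apply Te_0.
Qed.

End Op.


Theorem lemma1 (F : R -> R) (kappa a r sigma c lambda : R)
  (HF : positive_rv_cdf F)
  (HA1 : F 0 = 0)
  (Hkappa : 0 < kappa <= 1) (Hr : 0 <= r) (Hsigma : 0 < sigma)
  (Hc : 0 < c) (Hlambda : 0 < lambda) :
  forall p : R, 0 < p ->
  exists u0 : R, 0 < u0 /\
    exists g : R -> R,
      solves F (gamma_ kappa a r sigma) (alpha_ kappa sigma c)
             (mu_ kappa sigma lambda) p u0 g /\
      (forall h : R -> R,
         solves F (gamma_ kappa a r sigma) (alpha_ kappa sigma c)
                (mu_ kappa sigma lambda) p u0 h ->
         forall x, 0 <= x <= u0 -> h x = g x) /\
      g 0 = lambda * p / c.
Proof.
  intros p Hp.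
  destruct HF as [[HFm [HFr [_ HFinf]]] HFneg].
  assert (HF01 : forall x, 0 <= F x <= 1).
  { intros x. split.
    - destruct (Rlt_dec x 0). rewrite HFneg; lra. rewrite <- (HFneg (-1)) by lra. apply HFm; lra.
    - destruct (Rle_dec (F x) 1) as [|Hn]; auto. exfalso.
      assert (He : 0 < F x - 1) by lra.
      destruct (proj1 (filterlim_locally F 1) HFinf (mkposreal _ He)) as [M HM].
      specialize (HM (Rmax x M + 1) ltac:(pose proof (Rmax_r x M); lra)).
      change (Rabs (F (Rmax x M + 1) - 1) < F x - 1) in HM.
      assert (F x <= F (Rmax x M + 1)) by (apply HFm; pose proof (Rmax_l x M); lra).
      unfold Rabs in HM; destruct Rcase_abs; lra. }
  assert (HF0 : forall eps, 0 < eps -> exists d, 0 < d /\ forall t, 0 < t < d -> F t < eps).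
  { intros eps He. destruct (proj1 (filterlim_locally F (F 0)) (HFr 0) (mkposreal _ He)) as [d Hd].
    exists d. split. apply cond_pos. intros t Ht.
    assert (ball 0 d t). { change (Rabs (t - 0) < d). rewrite Rminus_0_r, Rabs_right; lra. }
    specialize (Hd t H (proj1 Ht)). change (Rabs (F t - F 0) < eps) in Hd.
    rewrite HA1 in Hd. unfold Rabs in Hd; destruct Rcase_abs; lra. }
  set (gam := gamma_ kappa a r sigma).
  set (alp := alpha_ kappa sigma c).
  set (mu := mu_ kappa sigma lambda).
  assert (Hks : 0 < kappa ^ 2 * sigma ^ 2) by (apply Rmult_lt_0_compat; apply pow_lt; lra).
  assert (Ha : 0 < alp) by (unfold alp, alpha_; apply Rdiv_lt_0_compat; lra).
  assert (Hmu : 0 < mu) by (unfold mu, mu_; apply Rdiv_lt_0_compat; lra).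
  set (u0 := Rmin 1 (Rmin (alp / (2 * (Rabs gam + 1))) (alp / (4 * mu)))).
  assert (Hg0 : 0 <= Rabs gam) by apply Rabs_pos.
  assert (U1 : u0 <= 1) by apply Rmin_l.
  assert (U2 : u0 <= alp / (2 * (Rabs gam + 1))) by (eapply Rle_trans; [apply Rmin_r|apply Rmin_l]).
  assert (U3 : u0 <= alp / (4 * mu)) by (eapply Rle_trans; [apply Rmin_r|apply Rmin_r]).
  assert (Hu0 : 0 < u0).
  { unfold u0. apply Rmin_pos. lra. apply Rmin_pos; apply Rdiv_lt_0_compat; lra. }
  assert (Hu0g : Rabs gam * u0 <= alp / 2).
  { apply Rle_trans with ((Rabs gam + 1) * (alp / (2 * (Rabs gam + 1)))).
    apply Rmult_le_compat; lra. right; field; lra. }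
  assert (Hu0m : 2 * mu * u0 / alp <= 1 / 2).
  { apply Rle_trans with (2 * mu * (alp / (4 * mu)) / alp).
    unfold Rdiv at 1 3. apply Rmult_le_compat_r. left; apply Rinv_0_lt_compat; lra.
    apply Rmult_le_compat_l; lra. right; field; lra. }
  destruct (main_op F gam alp mu p u0 HFm HF01 HF0 Ha Hmu Hp (conj Hu0 U1) Hu0g Hu0m)
    as [g [G1 [G2 [G3 G4]]]].
  exists u0. split; auto. exists g. split; [split; auto|split].
  - intros h Hh. apply G3. exact Hh.
  - rewrite G4. unfold Lc, mu, alp, mu_, alpha_. field. split; lra.
Qed.
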